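(* In a network satisfying (H1) and (H2), let $Y+S_0\rightleftarrows U_1\to Y+S_1\rightleftarrows\cdots\rightleftarrows U_L\to Y+S_L$ ($L\ge1$) be a connected component with rate constants $a_j,b_j,c_j$ as in the context. Fix $1\le n\le L$ and $0\le k\le n-1$. Let $\ell$ be the minimal positive integer such that a monomial $y^r u_{n-k}$ with some $r\ge0$ appears in $s_n^{(\ell)}$. Then $\ell=2k+1$, $r=k$, and the coefficient of $y^k u_{n-k}$ in $s_n^{(2k+1)}$ is \[c_{n-k}\prod_{j=0}^{k-1}a_{n-j}\,c_{n-j}\] (the empty product being $1$).
   Context: Species are capital letters, concentrations lower-case letters. Mass-action system: $\dot{\mathbf{x}}=\sum_{y\to y'}k_{yy'}\mathbf{x}^y(y'-y)$, rates $k_{yy'}>0$. Total derivative: $\dot\varphi=\sum_i\frac{\partial\varphi}{\partial x_i}\dot x_i$ with $\dot x_i$ replaced by the right-hand side; $\varphi^{(\ell)}$ the $\ell$-th iterate, a polynomial in concentrations with coefficients polynomial in the rate constants; a monomial appears if its coefficient is nonzero. (H1) Every connected component has the form $Y+S_0\rightleftarrows U_1\to\cdots\rightleftarrows U_L\to Y+S_L$: reactions $Y+S_{j-1}\to U_j$ (rate $a_j$), $U_j\to Y+S_{j-1}$ (rate $b_j$), $U_j\to Y+S_j$ (rate $c_j$); unique enzyme $Y$; intermediates distinct throughout the network; non-intermediates of a component pairwise distinct but may appear in other components; each complex in a unique component. $\mathscr{S}_U$ = substrates/products of the component of intermediate $U$. (H2) A partition $\mathscr{S}^{(0)}\sqcup\cdots\sqcup\mathscr{S}^{(M)}$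 ($M\ge2$, nonempty, $\mathscr{S}^{(0)}$ the intermediates) with: for each intermediate $U$ with enzyme $Y$, some $\alpha\ge1$ has $\mathscr{S}_U\subseteq\mathscr{S}^{(\alpha)}$, $Y\notin\mathscr{S}^{(\alpha)}$. *)

(* Defs.v *)
(* Polynomials are represented as formal sums of terms
   (integer coefficient, monomial); a monomial is a multiset (seq up to
   perm_eq) of variables, the variables being species concentrations (inl)
   and symbolic rate constants (inr).  Thus "polynomial in concentrations
   with coefficients polynomial in the rate constants" = polynomial over int
   in both kinds of variables. *)
From HB Require Import structures.
From mathcomp Require Import all_boot all_order all_algebra.
Set Implicit Arguments. Unset Strict Implicit. Unset Printing Implicit Defensive.
Import Order.TTheory GRing.Theory Num.Theory.
Local Open Scope ring_scope.

(* kind of reaction in a component: a_j (binding), b_j (unbinding), c_j (catalysis) *)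
Inductive rkind := RA | RB | RC.
Definition rkind_eqb (a b : rkind) : bool :=
  match a, b with RA, RA | RB, RB | RC, RC => true | _, _ => false end.
Lemma rkind_eqP : Equality.axiom rkind_eqb.
Proof. by case; case; constructor. Qed.
HB.instance Definition _ := hasDecEq.Build rkind rkind_eqP.

Section Network.
Variables (S : eqType) (C : finType).

(* rate constant label (component, index j, kind): k_(c,j,RA) = a_j etc. *)
Definition rlabel := (C * nat * rkind)%type.
Definition var := (S + rlabel)%type.
Definition mono := seq var.
Definition term := (int * mono)%type.
Definition crnpoly := seq term.

Definition coef (p : crnpoly) (m : mono) : int :=
  \sum_(t <- p | perm_eq t.2 m) t.1.

(* reaction: (reactant complex, product complex, rate label); complexes are
   multisets of species *)
Definition reaction := (seq S * seq S * rlabel)%type.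

Definition species_of (m : mono) : seq S :=
  undup (pmap (fun v : var => if v is inl x then Some x else None) m).

(* total derivative along the mass-action system of the network *)
Definition ddt (net : seq reaction) (p : crnpoly) : crnpoly :=
  flatten [seq flatten [seq
     [seq ((t.1 * (count_mem (inl x : var) t.2)%:Z
              * ((count_mem x r.1.2)%:Z - (count_mem x r.1.1)%:Z)),
           rem (inl x : var) t.2 ++ map (@inl S rlabel) r.1.1 ++ [:: (inr r.2 : var)])
     | r <- net]
   | x <- species_of t.2] | t <- p].

(* "a monomial (in the concentrations) m appears in p": its coefficient,
   a polynomial in the rate constants, is nonzero *)
Definition appears (p : crnpoly) (m : mono) : Prop :=
  exists w : seq rlabel, coef p (m ++ map (@inr S rlabel) w) != 0.

Variables (L : C -> nat) (Y : C -> S) (Sb U : C -> nat -> S).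

(* component c : Y+S_0 <-> U_1 -> Y+S_1 <-> ... <-> U_(L c) -> Y+S_(L c) *)
Definition comp_reactions (c : C) : seq reaction :=
  flatten [seq [:: ([:: Y c; Sb c j.-1], [:: U c j], (c, j, RA));
                   ([:: U c j], [:: Y c; Sb c j.-1], (c, j, RB));
                   ([:: U c j], [:: Y c; Sb c j], (c, j, RC))]
          | j <- iota 1 (L c)].

Definition network : seq reaction := flatten [seq comp_reactions c | c <- enum C].

Definition is_intermediate (x : S) : Prop :=
  exists c j, (0 < j <= L c)%N /\ x = U c j.

Definition H1 : Prop :=
  (forall c, 0 < L c)%N /\
  (forall c c' j j', (0 < j <= L c)%N -> (0 < j' <= L c')%N ->
      U c j = U c' j' -> c = c' /\ j = j') /\
  (forall c, uniq (Y c :: [seq Sb c i | i <- iota 0 (L c).+1])) /\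
  (forall c c' i i', (i <= L c)%N -> (i' <= L c')%N ->
      perm_eq [:: Y c; Sb c i] [:: Y c'; Sb c' i'] -> c = c') /\
  (forall c j c', (0 < j <= L c)%N ->
      U c j <> Y c' /\ (forall i, (i <= L c')%N -> U c j <> Sb c' i)) /\
  (forall x : S, exists c, x = Y c \/ (exists i, (i <= L c)%N /\ x = Sb c i)
                         \/ (exists j, (0 < j <= L c)%N /\ x = U c j)).

(* partition S^(0) |_| ... |_| S^(M) given by the class index part x *)
Definition H2 (part : S -> nat) (M : nat) : Prop :=
  (2 <= M)%N /\
  (forall x, part x <= M)%N /\
  (forall a, (a <= M)%N -> exists x, part x = a) /\
  (forall x, part x = 0%N <-> is_intermediate x) /\
  (forall c j, (0 < j <= L c)%N ->
     exists a, (0 < a)%N /\ (forall i, (i <= L c)%N -> part (Sb c i) = a)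
               /\ part (Y c) <> a).

End Network.

(* Main.v *)
Require Import Defs.
From HB Require Import structures.
From mathcomp Require Import all_boot all_order all_algebra.
From mathcomp Require Import zify ring.
Import GRing.Theory Num.Theory.
Set Implicit Arguments. Unset Strict Implicit. Unset Printing Implicit Defensive.

Section Proof.
Variables (S : eqType) (C : finType) (L : C -> nat) (Y : C -> S)
  (Sb U : C -> nat -> S) (part : S -> nat) (M : nat).
Hypothesis hH1 : H1 L Y Sb U.
Hypothesis hH2 : H2 L Y Sb U part M.

Definition valid (c' : C) (j : nat) := (0 < j <= L c')%N.

Lemma Lpos c' : (0 < L c')%N. Proof. by case: hH1. Qed.

Lemma U_inj c1 c2 j1 j2 : valid c1 j1 -> valid c2 j2 -> U c1 j1 = U c2 j2 -> c1 = c2 /\ j1 = j2.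
Proof. case: hH1 => _ [h _] ? ? ?; exact: h. Qed.

Lemma UneY c1 j c2 : valid c1 j -> U c1 j <> Y c2.
Proof. case: hH1 => _ [_ [_ [_ [h _]]]] v; by case: (h c1 j c2 v). Qed.

Lemma UneS c1 j c2 i : valid c1 j -> (i <= L c2)%N -> U c1 j <> Sb c2 i.
Proof. case: hH1 => _ [_ [_ [_ [h _]]]] v hi; by case: (h c1 j c2 v) => _ /(_ i hi). Qed.

Lemma cplx c1 c2 i1 i2 : (i1 <= L c1)%N -> (i2 <= L c2)%N ->
  Y c1 = Y c2 -> Sb c1 i1 = Sb c2 i2 -> c1 = c2.
Proof.
case: hH1 => _ [_ [_ [h _]]] h1 h2 e1 e2; apply: (h c1 c2 i1 i2 h1 h2).
by rewrite e1 e2.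
Qed.

Lemma uniqc c' : uniq (Y c' :: [seq Sb c' i | i <- iota 0 (L c').+1]).
Proof. by case: hH1 => _ [_ [h _]]. Qed.

Lemma YneS c' i : (i <= L c')%N -> Y c' <> Sb c' i.
Proof.
move=> hi e; have := uniqc c'; rewrite cons_uniq => /andP[/negP h _]; apply: h.
rewrite e; apply/mapP; exists i => //; rewrite mem_iota; lia.
Qed.

Lemma Sb_inj c' i1 i2 : (i1 <= L c')%N -> (i2 <= L c')%N -> Sb c' i1 = Sb c' i2 -> i1 = i2.
Proof.
move=> h1 h2 e; have := uniqc c'; rewrite cons_uniq => /andP[_ u].
have := nth_uniq (Y c') (s := [seq Sb c' i | i <- iota 0 (L c').+1]) (i := i1) (j := i2).
rewrite size_map size_iota !(nth_map 0%N) ?size_iota ?nth_iota; try lia.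
rewrite !add0n e eqxx => h; apply/eqP; rewrite -h //; lia.
Qed.

Lemma classes c' : exists a, (0 < a)%N /\ (forall i, (i <= L c')%N -> part (Sb c' i) = a)
   /\ part (Y c') <> a.
Proof.
case: hH2 => _ [_ [_ [_ h]]]; apply: (h c' 1%N); rewrite /= (Lpos c'); done.
Qed.

Lemma partS c' i1 i2 : (i1 <= L c')%N -> (i2 <= L c')%N -> part (Sb c' i1) = part (Sb c' i2).
Proof. by case: (classes c') => a [_ [h _]] h1 h2; rewrite !h. Qed.

Lemma partYS c' i : (i <= L c')%N -> part (Y c') <> part (Sb c' i).
Proof. by case: (classes c') => a [_ [h h']] h1; rewrite h. Qed.


Definition rA c' j : reaction S C := ([:: Y c'; Sb c' j.-1], [:: U c' j], (c', j, RA)).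
Definition rB c' j : reaction S C := ([:: U c' j], [:: Y c'; Sb c' j.-1], (c', j, RB)).
Definition rC c' j : reaction S C := ([:: U c' j], [:: Y c'; Sb c' j], (c', j, RC)).

Lemma mem_net r : r \in network L Y Sb U ->
  exists c' j, valid c' j /\ (r = rA c' j \/ r = rB c' j \/ r = rC c' j).
Proof.
case/flattenP=> s /mapP[c' _ ->] /flattenP[s' /mapP[j]].
rewrite mem_iota => hj -> hr; exists c', j; split; first by rewrite /valid; lia.
by move: hr; rewrite !inE => /orP[/eqP->|/orP[/eqP->|/eqP->]]; auto.
Qed.

Definition Ulist : seq (C * nat) :=
  flatten [seq [seq (c', j) | j <- iota 1 (L c')] | c' <- enum C].
Definition findU (s : S) : option (C * nat) := ohead [seq p <- Ulist | U p.1 p.2 == s].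

Lemma mem_Ulist p : (p \in Ulist) = valid p.1 p.2.
Proof.
case: p => c' j /=; apply/flattenP/idP.
  by case=> s /mapP[c'' _ ->] /mapP[j' ]; rewrite mem_iota /valid => hj [-> ->]; lia.
move=> hv; exists [seq (c', j) | j <- iota 1 (L c')]; first by apply/mapP; exists c'; rewrite ?mem_enum.
by apply/mapP; exists j; rewrite // mem_iota; move: hv; rewrite /valid; lia.
Qed.

Lemma findU_Some s p : findU s = Some p -> valid p.1 p.2 /\ U p.1 p.2 = s.
Proof.
rewrite /findU; case E: [seq p <- Ulist | U p.1 p.2 == s] => [|q l] //= [<-].
have : q \in [seq p <- Ulist | U p.1 p.2 == s] by rewrite E inE eqxx.
by rewrite mem_filter mem_Ulist => /andP[/eqP-> ->].
Qed.

Lemma findU_U c' j : valid c' j -> findU (U c' j) = Some (c', j).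
Proof.
move=> hv; rewrite /findU.
have : (c', j) \in [seq p <- Ulist | U p.1 p.2 == U c' j] by rewrite mem_filter mem_Ulist eqxx.
case E: [seq p <- Ulist | U p.1 p.2 == U c' j] => [|q l] //= _.
have : q \in [seq p <- Ulist | U p.1 p.2 == U c' j] by rewrite E inE eqxx.
rewrite mem_filter mem_Ulist; case: q {E} => c1 j1 /= /andP[/eqP e h].
by case: (U_inj h hv e) => -> ->.
Qed.

Lemma findU_Y c' : findU (Y c') = None.
Proof.
case E: (findU (Y c')) => [p|] //; case: (findU_Some E) => h e; exfalso; exact: (UneY h e).
Qed.

Lemma findU_S c' i : (i <= L c')%N -> findU (Sb c' i) = None.
Proof.
move=> hi; case E: (findU (Sb c' i)) => [p|] //; case: (findU_Some E) => h e.
exfalso; exact: (UneS h hi e).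
Qed.

Definition tok (s : S) : seq S :=
  if findU s is Some p then [:: Y p.1; Sb p.1 p.2.-1] else [:: s].
Definition isI (s : S) : nat := if findU s is Some _ then 1%N else 0%N.

Variables (c : C) (n k : nat).
Hypothesis hn : (1 <= n <= L c)%N.
Hypothesis hk : (k < n)%N.

Definition alpha := part (Sb c 0).
Definition sc := [seq Sb c i | i <- iota 0 (L c).+1].
Definition th (t : S) : nat := if t \in sc then (2 * (index t sc - (n - k).-1))%N else 0%N.
Definition gam (s : S) : nat := (\sum_(t <- tok s) th t + isI s)%N.
Definition Acnt (s : S) : nat := count (fun t => part t == alpha) (tok s).
Definition Jcnt (s : S) : nat := count (fun t => (t != Y c) && (part t != alpha)) (tok s).

Lemma th_S i : (i <= L c)%N -> th (Sb c i) = (2 * (i - (n - k).-1))%N.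
Proof.
move=> hi; have hm : Sb c i \in sc by apply/mapP; exists i; rewrite // mem_iota; lia.
rewrite /th hm; congr (2 * (_ - _))%N.
have := uniqc c; rewrite cons_uniq => /andP[_ u].
have -> : Sb c i = nth (Y c) sc i by rewrite /sc (nth_map 0%N) ?size_iota ?nth_iota //; lia.
by rewrite index_uniq // /sc size_map size_iota; lia.
Qed.

Lemma th_pos t : (0 < th t)%N -> exists i, (i <= L c)%N /\ t = Sb c i /\ (n - k <= i)%N.
Proof.
move=> hp; have : t \in sc by move: hp; rewrite /th; case: ifP.
case/mapP=> i; rewrite mem_iota => hi et; subst t.
have hi' : (i <= L c)%N by lia.
exists i; split=> //; split=> //; move: hp; rewrite th_S //; lia.
Qed.

Lemma th_Y : th (Y c) = 0%N.
Proof.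
rewrite /th; case: ifP => // h; have := uniqc c; by rewrite cons_uniq h.
Qed.

Lemma alphaS i : (i <= L c)%N -> part (Sb c i) = alpha.
Proof. by move=> hi; rewrite /alpha (partS (i2 := 0%N) hi). Qed.

Lemma alphaY : part (Y c) <> alpha.
Proof. by apply: partYS. Qed.


Definition TA (R : seq S) := (\sum_(s <- R) Acnt s)%N.
Definition TJ (R : seq S) := (\sum_(s <- R) Jcnt s)%N.
Definition TG (R : seq S) := (\sum_(s <- R) gam s)%N.

Lemma gamN s : findU s = None -> gam s = th s.
Proof. by rewrite /gam /tok /isI => ->; rewrite big_seq1 addn0. Qed.
Lemma AcntN s : findU s = None -> Acnt s = (part s == alpha).
Proof. by rewrite /Acnt /tok => -> /=; rewrite addn0. Qed.
Lemma JcntN s : findU s = None -> Jcnt s = ((s != Y c) && (part s != alpha)).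
Proof. by rewrite /Jcnt /tok => -> /=; rewrite addn0. Qed.
Lemma gamU c' j : valid c' j -> gam (U c' j) = (th (Y c') + th (Sb c' j.-1) + 1)%N.
Proof. by move=> h; rewrite /gam /tok /isI findU_U //= big_cons big_seq1. Qed.
Lemma AcntU c' j : valid c' j -> Acnt (U c' j) = ((part (Y c') == alpha) + (part (Sb c' j.-1) == alpha))%N.
Proof. by move=> h; rewrite /Acnt /tok findU_U //= addn0. Qed.
Lemma JcntU c' j : valid c' j -> Jcnt (U c' j) =
  (((Y c' != Y c) && (part (Y c') != alpha)) + ((Sb c' j.-1 != Y c) && (part (Sb c' j.-1) != alpha)))%N.
Proof. by move=> h; rewrite /Jcnt /tok findU_U //= addn0. Qed.

Lemma delta_mem x (r : reaction S C) : count_mem x r.1.2 != count_mem x r.1.1 -> x \in r.1.1 ++ r.1.2.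
Proof.
move=> h; rewrite mem_cat; apply/negPn/negP; rewrite negb_or => /andP[h1 h2].
by move: h; rewrite (count_memPn h1) (count_memPn h2).
Qed.

Definition tight_char x (r : reaction S C) :=
  (exists c' j, valid c' j /\ x = U c' j /\ r = rA c' j) \/
  (exists i, (n - k <= i <= L c)%N /\ x = Sb c i /\ r = rC c i).

Lemma step_species (r : reaction S C) x : r \in network L Y Sb U ->
  count_mem x r.1.2 != count_mem x r.1.1 ->
  [/\ (Acnt x <= TA r.1.1)%N, (Jcnt x <= TJ r.1.1)%N \/ (Acnt x < TA r.1.1)%N,
      (1 <= TJ r.1.1)%N \/ (gam x <= TG r.1.1 + 1)%N
    & (gam x = TG r.1.1 + 1)%N -> TJ r.1.1 = 0%N -> tight_char x r].
Proof.
move=> /mem_net [c' [j [hv hr]]] hd; have := delta_mem hd.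
have hj1 : (j.-1 <= L c')%N by move: hv; rewrite /valid; lia.
have hj : (j <= L c')%N by move: hv; rewrite /valid; lia.
have fY := findU_Y c'; have fP := findU_S hj1; have fS := findU_S hj.
rewrite /TA /TJ /TG.
case: hr => [->|[->|->]] /=; rewrite ?big_cons ?big_nil !inE.
- rewrite (gamN fY) (gamN fP) (AcntN fY) (AcntN fP) (JcntN fY) (JcntN fP).
  case/or3P=> /eqP->.
  + rewrite (gamN fY) (AcntN fY) (JcntN fY); split; [lia | left; lia | right; lia | move=> h; lia].
  + rewrite (gamN fP) (AcntN fP) (JcntN fP); split; [lia | left; lia | right; lia | move=> h; lia].
  + rewrite (gamU hv) (AcntU hv) (JcntU hv); split; [lia | left; lia | right; lia | ].
    by move=> _ _; left; exists c', j.
- rewrite (gamU hv) (AcntU hv) (JcntU hv).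
  case/or3P=> /eqP->.
  + rewrite (gamU hv) (AcntU hv) (JcntU hv); split; [lia | left; lia | right; lia | move=> h; lia].
  + rewrite (gamN fY) (AcntN fY) (JcntN fY); split; [lia | left; lia | right; lia | move=> h; lia].
  + rewrite (gamN fP) (AcntN fP) (JcntN fP); split; [lia | left; lia | right; lia | move=> h; lia].
- rewrite (gamU hv) (AcntU hv) (JcntU hv).
  case/or3P=> /eqP->.
  + rewrite (gamU hv) (AcntU hv) (JcntU hv); split; [lia | left; lia | right; lia | move=> h; lia].
  + rewrite (gamN fY) (AcntN fY) (JcntN fY); split; [lia | left; lia | right; lia | move=> h; lia].
  + rewrite (gamN fS) (AcntN fS) (JcntN fS).
    have ePS : part (Sb c' j) = part (Sb c' j.-1) by apply: partS.
    have nYP : Y c' <> Sb c' j.-1 by apply: YneS.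
    have pYP : part (Y c') <> part (Sb c' j.-1) by apply: partYS.
    rewrite ePS; split.
    * lia.
    * case eP: (part (Sb c' j.-1) == alpha); first by left; rewrite andbF.
      case eY: (part (Y c') == alpha); first by right.
      case e1: (Y c' == Y c).
        move/eqP: e1 => e1; have -> : (Sb c' j.-1 != Y c) by apply/eqP => e2; apply: nYP; rewrite e1 e2.
        by left; rewrite /=; lia.
      by left; rewrite /=; lia.
    * case: (posnP (th (Sb c' j))) => [->|/th_pos [i [hi [ei hki]]]]; first by right; lia.
      case: (eqVneq c' c) => [ecc|ncc].
        subst c'; have eji : j = i by apply: (Sb_inj hj hi).
        subst j; move: ei; rewrite th_S // => _.
        rewrite th_S; last lia.
        right; have : (0 < n - k)%N by lia. lia.
      have nY : Y c' != Y c.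
        apply/eqP => eY; move/eqP: ncc; apply; exact: (cplx hj hi eY ei).
      have pY : part (Y c') != alpha.
        by apply/eqP => pe; apply: pYP; rewrite -ePS ei alphaS.
      by left; rewrite nY pY /=; lia.
    * case: (posnP (th (Sb c' j))) => [->|/th_pos [i [hi [ei hki]]]]; first lia.
      case: (eqVneq c' c) => [ecc|ncc].
        subst c'; have eji : j = i by apply: (Sb_inj hj hi).
        subst j => _ _; right; exists i; split => //; lia.
      have nY : Y c' != Y c.
        apply/eqP => eY; move/eqP: ncc; apply; exact: (cplx hj hi eY ei).
      have pY : part (Y c') != alpha.
        by apply/eqP => pe; apply: pYP; rewrite -ePS ei alphaS.
      by rewrite nY pY /=; lia.
Qed.


Definition fv (f : S -> nat) (v : var S C) : nat := if v is inl s then f s else 0%N.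
Definition Am (m : mono S C) := (\sum_(v <- m) fv Acnt v)%N.
Definition Jm (m : mono S C) := (\sum_(v <- m) fv Jcnt v)%N.
Definition Gm (m : mono S C) := (\sum_(v <- m) fv gam v)%N.
Definition Bad (m : mono S C) := (1 <= Jm m)%N || (2 <= Am m)%N.

Definition cm (m : mono S C) x (r : reaction S C) : mono S C :=
  rem (inl x) m ++ map inl r.1.1 ++ [:: inr r.2].

Definition Rs f m x := (\sum_(v <- rem (inl x) m) fv f v)%N.

Lemma sum_child f m x (r : reaction S C) : inl x \in m ->
  (\sum_(v <- m) fv f v = f x + Rs f m x)%N /\
  (\sum_(v <- cm m x r) fv f v = Rs f m x + \sum_(s <- r.1.1) f s)%N.
Proof.
move=> hx; rewrite (perm_big _ (perm_to_rem hx)) /= big_cons /cm !big_cat /=.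
by rewrite big_map big_seq1 /= addn0.
Qed.

Lemma step_mono m x (r : reaction S C) : r \in network L Y Sb U ->
  count_mem x r.1.2 != count_mem x r.1.1 -> inl x \in m -> (1 <= Am m)%N ->
  [/\ (Am m <= Am (cm m x r))%N, Bad m -> Bad (cm m x r),
      Bad (cm m x r) \/ (Gm m <= Gm (cm m x r) + 1)%N
    & Gm m = (Gm (cm m x r) + 1)%N -> ~~ Bad (cm m x r) -> tight_char x r].
Proof.
move=> hr hd hx hA; case: (step_species hr hd) => s1 s2 s3 s4; clear hd.
have [eA1 eA2] : (Am m = Acnt x + Rs Acnt m x /\ Am (cm m x r) = Rs Acnt m x + TA r.1.1)%N
  := sum_child Acnt r hx.
have [eJ1 eJ2] : (Jm m = Jcnt x + Rs Jcnt m x /\ Jm (cm m x r) = Rs Jcnt m x + TJ r.1.1)%N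
  := sum_child Jcnt r hx.
have [eG1 eG2] : (Gm m = gam x + Rs gam m x /\ Gm (cm m x r) = Rs gam m x + TG r.1.1)%N
  := sum_child gam r hx.
rewrite /Bad.
split.
- lia.
- move=> /orP [h|h]; apply/orP.
    by case: s2 => s2; [left; lia | right; lia].
  by right; lia.
- case: s3 => s3; [left; apply/orP; left; lia | right; lia].
- move=> h /norP[h1 h2]; apply: s4; lia.
Qed.


Definition E (i : nat) : seq (rlabel C) :=
  flatten [seq [:: (c, (n - j)%N, RA); (c, (n - j)%N, RC)] | j <- iota 0 i].
Definition labs (l : nat) := if odd l then (c, (n - l./2)%N, RC) :: E l./2 else E l./2.
Definition xs (l : nat) := if odd l then U c (n - l./2) else Sb c (n - l./2).
Definition rs (l : nat) := if odd l then rA c (n - l./2) else rC c (n - l./2).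
Definition canon (l : nat) : mono S C :=
  inl (xs l) :: nseq l./2 (inl (Y c)) ++ map inr (labs l).

Lemma half_step l : l.+1./2 = (odd l + l./2)%N.
Proof. by rewrite /= uphalf_half. Qed.

Lemma half_le l : (l <= 2 * k + 1)%N -> (l./2 <= k)%N.
Proof.
move=> h; have := odd_double_half l; rewrite -muln2; lia.
Qed.

Lemma valid_can l : (l <= 2 * k + 1)%N -> valid c (n - l./2).
Proof. move=> /half_le h; rewrite /valid; lia. Qed.

Lemma xs_neY l : (l <= 2 * k + 1)%N -> xs l <> Y c.
Proof.
move=> h; have hv := valid_can h; rewrite /xs; case: ifP => _.
  exact: UneY.
by move=> e; apply: (@YneS c (n - l./2)); [move: hv; rewrite /valid; lia | rewrite e].
Qed.

Lemma perm_bigf f (m1 m2 : mono S C) : perm_eq m1 m2 ->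
  (\sum_(v <- m1) fv f v = \sum_(v <- m2) fv f v)%N.
Proof. exact: perm_big. Qed.

Lemma sum_canon f l : (\sum_(v <- canon l) fv f v = f (xs l) + l./2 * f (Y c))%N.
Proof.
rewrite /canon big_cons big_cat /= big_map [X in (_ + (_ + X))%N]big1 // addn0 big_nseq.
congr (_ + _)%N; elim: (l./2) => //= i ->; rewrite mulSn //.
Qed.

Lemma gamY : gam (Y c) = 0%N.
Proof. by rewrite gamN ?findU_Y // th_Y. Qed.
Lemma AcntY : Acnt (Y c) = 0%N.
Proof. rewrite AcntN ?findU_Y //; case: eqP => // /alphaY. done. Qed.
Lemma JcntY : Jcnt (Y c) = 0%N.
Proof. by rewrite JcntN ?findU_Y // eqxx. Qed.

Definition g0 := (2 * (k + 1))%N.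

Lemma Gm_canon l : (l <= 2 * k + 1)%N -> (Gm (canon l) + l = g0)%N.
Proof.
move=> h; have hv := valid_can h; have hh := half_le h.
have e := odd_double_half l; rewrite -muln2 in e.
rewrite /Gm sum_canon gamY muln0 addn0 /xs /g0.
case: ifP e => o e.
  have hS1 : ((n - l./2).-1 <= L c)%N by move: hv; rewrite /valid; lia.
  rewrite gamU // th_Y th_S //.
  have : (0 < n - k)%N by lia. lia.
have hS : (n - l./2 <= L c)%N by move: hv; rewrite /valid; lia.
rewrite (gamN (findU_S hS)) th_S //.
have : (0 < n - k)%N by lia. lia.
Qed.

Lemma Am_canon l : (l <= 2 * k + 1)%N -> Am (canon l) = 1%N.
Proof.
move=> h; have hv := valid_can h.
rewrite /Am sum_canon AcntY muln0 addn0 /xs.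
case: ifP => _.
  have hS1 : ((n - l./2).-1 <= L c)%N by move: hv; rewrite /valid; lia.
  rewrite AcntU // alphaS //.
  by case: eqP => [/alphaY|]; rewrite ?eqxx.
have hS : (n - l./2 <= L c)%N by move: hv; rewrite /valid; lia.
by rewrite (AcntN (findU_S hS)) alphaS ?eqxx.
Qed.

Lemma Jm_canon l : (l <= 2 * k + 1)%N -> Jm (canon l) = 0%N.
Proof.
move=> h; have hv := valid_can h.
rewrite /Jm sum_canon JcntY muln0 addn0 /xs.
case: ifP => _.
  have hS1 : ((n - l./2).-1 <= L c)%N by move: hv; rewrite /valid; lia.
  rewrite JcntU // alphaS //.
  by rewrite !eqxx /= andbF.
have hS : (n - l./2 <= L c)%N by move: hv; rewrite /valid; lia.
by rewrite (JcntN (findU_S hS)) alphaS ?eqxx ?andbF.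
Qed.


Lemma mem_rK c' j : valid c' j ->
  [/\ rA c' j \in network L Y Sb U, rB c' j \in network L Y Sb U & rC c' j \in network L Y Sb U].
Proof.
move=> hv.
have h : forall r, r \in [:: rA c' j; rB c' j; rC c' j] -> r \in network L Y Sb U.
  move=> r hr; apply/flattenP; exists (comp_reactions L Y Sb U c').
    by apply/mapP; exists c'; rewrite ?mem_enum.
  apply/flattenP; exists [:: rA c' j; rB c' j; rC c' j] => //.
  apply/mapP; exists j => //; rewrite mem_iota; move: hv; rewrite /valid; lia.
by split; apply: h; rewrite !inE eqxx ?orbT.
Qed.

Lemma rs_net l : (l <= 2 * k + 1)%N -> rs l \in network L Y Sb U.
Proof. move=> /valid_can hv; rewrite /rs; case: ifP => _; by case: (mem_rK hv). Qed.

Lemma rs_delta l : (l <= 2 * k + 1)%N ->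
  count_mem (xs l) (rs l).1.2 = 1%N /\ count_mem (xs l) (rs l).1.1 = 0%N.
Proof.
move=> h; have hv := valid_can h.
have hS : (n - l./2 <= L c)%N by move: hv; rewrite /valid; lia.
have hS1 : ((n - l./2).-1 <= L c)%N by move: hv; rewrite /valid; lia.
rewrite /rs /xs; case: ifP => _ /=.
  have n1 : (Y c == U c (n - l./2)) = false by apply/eqP => e; exact: (UneY hv (esym e)).
  have n2 : (Sb c (n - l./2).-1 == U c (n - l./2)) = false
    by apply/eqP => e; exact: (UneS hv hS1 (esym e)).
  by rewrite eqxx n1 n2.
have n1 : (Y c == Sb c (n - l./2)) = false by apply/eqP; apply: YneS.
have n2 : (U c (n - l./2) == Sb c (n - l./2)) = false by apply/eqP; apply: UneS.
by rewrite eqxx n1 n2.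
Qed.

Lemma mem_canon l x : inl x \in canon l -> x = xs l \/ x = Y c.
Proof.
rewrite /canon inE mem_cat mem_nseq => /orP[/eqP[]|/orP[/andP[_ /eqP[]]|/mapP[? _ //]]]; auto.
Qed.

Lemma count_canon l : (l <= 2 * k + 1)%N -> count_mem (inl (xs l)) (canon l) = 1%N.
Proof.
move=> h; rewrite /canon /= eqxx count_cat count_nseq /=.
have -> : (inl (Y c) == inl (xs l) :> var S C) = false.
  by apply/eqP => -[] e; apply: (xs_neY h).
rewrite count_map; have -> : count (preim inr (pred1 (inl (xs l) : var S C))) (labs l) = 0%N.
  by apply/eqP; rewrite -leqn0 leqNgt -has_count; apply/hasPn.
by [].
Qed.

Lemma perm_rem_head (T : eqType) (a : T) m rest : perm_eq m (a :: rest) -> perm_eq (rem a m) rest.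
Proof.
move=> hp; have ha : a \in m by rewrite (perm_mem hp) inE eqxx.
by rewrite -(perm_cons a); apply: perm_trans hp; rewrite perm_sym; apply: perm_to_rem.
Qed.

Lemma E_S i : E i.+1 = E i ++ [:: (c, (n - i)%N, RA); (c, (n - i)%N, RC)].
Proof. by rewrite /E -addn1 iotaD map_cat flatten_cat /= add0n. Qed.

Lemma canon_step m l : (l <= 2 * k)%N -> perm_eq m (canon l) ->
  perm_eq (cm m (xs l) (rs l)) (canon l.+1).
Proof.
move=> h hp; have := perm_rem_head hp => hr.
rewrite /cm (perm_catr _ hr).
rewrite /canon /xs /rs /labs half_step oddS.
case: (odd l).
  rewrite add1n E_S subnS map_cat /=.
  apply/permP => p; rewrite /= !count_cat /=; clear hp hr; ring.
rewrite add0n /=; apply/permP => p; rewrite /= !count_cat /=; clear hp hr; ring.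
Qed.

Lemma tight_canon l x r : (l <= 2 * k + 1)%N -> (x = xs l \/ x = Y c) -> tight_char x r ->
  x = xs l /\ r = rs l.
Proof.
move=> h hx ht; have hv := valid_can h.
have hS : (n - l./2 <= L c)%N by move: hv; rewrite /valid; lia.
case: ht hx => [[c' [j [hv' [-> ->]]]]|[i [hi [-> ->]]]] hx.
- case: hx; last by move=> e; exfalso; exact: (UneY hv' e).
  rewrite /xs /rs; case: ifP => _ e.
    by case: (U_inj hv' hv e) => -> ->.
  by exfalso; exact: (UneS hv' hS e).
- have hi' : (i <= L c)%N by lia.
  case: hx => e; last by exfalso; apply: (@YneS c i hi'); rewrite e.
  move: e; rewrite /xs /rs; case: ifP => _ e.
    by exfalso; apply: (UneS hv hi'); rewrite e.
  by rewrite (Sb_inj hi' hS e).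
Qed.


Lemma uniq_flatten_map (T1 T2 : eqType) (f : T1 -> seq T2) s : uniq s ->
  (forall a, a \in s -> uniq (f a)) ->
  (forall a b y, a \in s -> b \in s -> y \in f a -> y \in f b -> a = b) ->
  uniq (flatten (map f s)).
Proof.
elim: s => //= a s IH /andP[ha hs] hu hd; rewrite cat_uniq hu ?inE ?eqxx //=.
rewrite IH ?andbT; first last.
- by move=> a' b y h1 h2; apply: hd; rewrite inE ?h1 ?h2 orbT.
- by move=> a' h; apply: hu; rewrite inE h orbT.
- done.
apply/hasPn => y /flattenP[t /mapP[b hb ->]] hy; apply/negP => hy'.
have e : a = b by apply: (hd a b y); rewrite ?inE ?eqxx ?hb ?orbT.
by move: ha; rewrite e hb.
Qed.

Lemma comp_lab c' r : r \in comp_reactions L Y Sb U c' -> r.2.1.1 = c'.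
Proof. by case/flattenP=> t /mapP[j _ ->]; rewrite !inE => /or3P[] /eqP->. Qed.

Lemma uniq_net : uniq (network L Y Sb U).
Proof.
apply: uniq_flatten_map; first exact: enum_uniq.
  move=> c' _; apply: uniq_flatten_map; first exact: iota_uniq.
    move=> j _ /=; rewrite !inE; apply/and3P; split => //.
    - by apply/norP; split; apply/eqP => -[].
    - by apply/eqP => -[].
  by move=> j1 j2 y _ _; rewrite !inE => /or3P[] /eqP-> /or3P[] /eqP[].
by move=> a b y _ _ /comp_lab <- /comp_lab.
Qed.

Lemma species_mem (m : mono S C) x : (x \in species_of m) = (inl x \in m).
Proof.
rewrite /species_of mem_undup mem_pmap; apply/mapP/idP.
  by case=> v hv; case: v hv => // s hv [->].
by move=> h; exists (inl x).
Qed.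

Local Open Scope ring_scope.

Definition child (t : term S C) x (r : reaction S C) : term S C :=
  (t.1 * (count_mem (inl x : var S C) t.2)%:Z
     * ((count_mem x r.1.2)%:Z - (count_mem x r.1.1)%:Z), cm t.2 x r).

Lemma ddtE p : ddt (network L Y Sb U) p =
  flatten [seq flatten [seq [seq child t x r | r <- network L Y Sb U] | x <- species_of t.2] | t <- p].
Proof. by []. Qed.

Lemma ddt_sum p (P : pred (term S C)) :
  \sum_(t' <- ddt (network L Y Sb U) p | P t') t'.1 =
  \sum_(t <- p) \sum_(x <- species_of t.2) \sum_(r <- network L Y Sb U)
     (if P (child t x r) then (child t x r).1 else 0).
Proof.
rewrite big_mkcond ddtE big_flatten big_map; apply: eq_bigr => t _.
rewrite big_flatten big_map; apply: eq_bigr => x _; by rewrite big_map.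
Qed.

Lemma mem_ddt p t' : t' \in ddt (network L Y Sb U) p ->
  exists t x r, [/\ t \in p, x \in species_of t.2, r \in network L Y Sb U & t' = child t x r].
Proof.
rewrite ddtE => /flattenP[u /mapP[t ht ->]] /flattenP[v /mapP[x hx ->]] /mapP[r hr ->].
by exists t, x, r.
Qed.

Lemma child_nz t x r : (child t x r).1 != 0 ->
  [/\ t.1 != 0, count_mem x r.1.2 != count_mem x r.1.1 & t.1 = 0 -> False].
Proof.
rewrite /child /= !mulf_eq0 !negb_or => /andP[/andP[h1 _] h3]; split => //.
  by move: h3; rewrite subr_eq0 eqz_nat.
by move=> e; move: h1; rewrite e eqxx.
Qed.


Lemma Bad_perm (m1 m2 : mono S C) : perm_eq m1 m2 -> Bad m1 = Bad m2.
Proof. by move=> h; rewrite /Bad /Am /Jm !(perm_bigf _ h). Qed.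

Lemma Gm_perm (m1 m2 : mono S C) : perm_eq m1 m2 -> Gm m1 = Gm m2.
Proof. by move=> h; rewrite /Gm (perm_bigf _ h). Qed.

Definition Tri l (m : mono S C) :=
  Bad m \/ (g0 < Gm m + l)%N \/ perm_eq m (canon l).

Lemma child_cases l t x r : (l <= 2 * k)%N -> x \in species_of t.2 ->
  r \in network L Y Sb U -> (child t x r).1 != 0 -> (1 <= Am t.2)%N -> Tri l t.2 ->
  (1 <= Am (child t x r).2)%N /\
  (Bad (child t x r).2 \/ (g0 < Gm (child t x r).2 + l.+1)%N \/
   (perm_eq t.2 (canon l) /\ x = xs l /\ r = rs l)).
Proof.
move=> hl hx hr hnz hA htri; case: (child_nz hnz) => _ hd _.
rewrite species_mem in hx; rewrite /child /=.
case: (step_mono hr hd hx hA) => a1 a2 a3 a4; split; first lia.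
case: htri => [hB|[hG|hP]].
- by left; apply: a2.
- case: a3 => [?|a3]; [by left | right; left; lia].
- have eG : (Gm t.2 + l = g0)%N by rewrite (Gm_perm hP) Gm_canon //; lia.
  case: a3 => [?|a3]; first by left.
  case: (ltngtP (Gm t.2) (Gm (cm t.2 x r) + 1)) => hc.
  + right; left; lia.
  + lia.
  + case hB: (Bad (cm t.2 x r)); first by left.
    have ht := a4 hc (negbT hB).
    have hx' : x = xs l \/ x = Y c by apply: mem_canon; rewrite -(perm_mem hP).
    by case: (tight_canon _ hx' ht) => //; [lia | move=> -> ->; right; right].
Qed.

Lemma not_canon' l (m : mono S C) : (l <= 2 * k)%N -> Bad m \/ (g0 < Gm m + l.+1)%N ->
  ~~ perm_eq m (canon l.+1).
Proof.
move=> hl h; apply/negP => hp.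
have hl' : (l.+1 <= 2 * k + 1)%N by lia.
case: h => [hB|hG].
  by move: hB; rewrite (Bad_perm hp) /Bad Jm_canon ?Am_canon.
by move: hG; rewrite (Gm_perm hp); have := Gm_canon hl'; lia.
Qed.

Lemma summand_zero l t x r : (l <= 2 * k)%N -> x \in species_of t.2 ->
  r \in network L Y Sb U -> (t.1 != 0 -> (1 <= Am t.2)%N /\ Tri l t.2) ->
  ~ (perm_eq t.2 (canon l) /\ x = xs l /\ r = rs l) ->
  (if perm_eq (child t x r).2 (canon l.+1) then (child t x r).1 else 0) = 0.
Proof.
move=> hl hx hr hI hneg.
case E: ((child t x r).1 == 0); first by rewrite (eqP E); case: ifP.
have hnz : (child t x r).1 != 0 by rewrite E.
case: (child_nz hnz) => h1 _ _; case: (hI h1) => hA htri.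
case: (child_cases hl hx hr hnz hA htri) => _ [hB|[hG|hc]].
- by rewrite (negbTE (not_canon' hl (or_introl hB))).
- by rewrite (negbTE (not_canon' hl (or_intror hG))).
- by exfalso; apply: hneg.
Qed.

Definition Inv l (p : crnpoly S C) :=
  (forall t, t \in p -> t.1 != 0 -> (1 <= Am t.2)%N /\ Tri l t.2) /\
  \sum_(t <- p | perm_eq t.2 (canon l)) t.1 = 1.

Lemma Inv_step l p : (l <= 2 * k)%N -> Inv l p -> Inv l.+1 (ddt (network L Y Sb U) p).
Proof.
move=> hl [HP HS]; split.
  move=> t' /mem_ddt [t [x [r [ht hx hr ->]]]] hnz.
  case: (child_nz hnz) => h1 _ _; case: (HP t ht h1) => hA htri.
  case: (child_cases hl hx hr hnz hA htri) => hA' [hB|[hG|[hp [ex er]]]]; split => //.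
  - by left.
  - by right; left.
  - by right; right; rewrite /child /= ex er; apply: canon_step.
rewrite ddt_sum -HS [RHS]big_mkcond /=; apply: eq_big_seq => t ht.
have hI : t.1 != 0 -> (1 <= Am t.2)%N /\ Tri l t.2 by apply: HP.
case hp: (perm_eq t.2 (canon l)); last first.
  rewrite big_seq big1 // => x hx; rewrite big_seq big1 // => r hr.
  apply: (summand_zero (t := t)) => //.
  by case=> h _; rewrite h in hp.
have hxs : xs l \in species_of t.2 by rewrite species_mem (perm_mem hp) inE eqxx.
rewrite (bigD1_seq (xs l)) ?undup_uniq //=.
rewrite [X in _ + X]big_seq_cond [X in _ + X]big1 ?addr0; last first.
  move=> x /andP[hx hne]; rewrite big_seq big1 // => r hr.
  apply: (summand_zero (t := t)) => //.
  by case=> _ [e _]; rewrite e eqxx in hne.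
have hl1 : (l <= 2 * k + 1)%N by lia.
rewrite (bigD1_seq (rs l)) ?uniq_net ?rs_net //=.
rewrite [X in _ + X]big_seq_cond [X in _ + X]big1 ?addr0; last first.
  move=> r /andP[hr hne].
  apply: (summand_zero (t := t)) => //.
  by case=> _ [_ e]; rewrite e eqxx in hne.
rewrite /child /= canon_step //.
case: (rs_delta hl1) => -> ->.
have -> : count_mem (inl (xs l) : var S C) t.2 = 1%N by rewrite (permP hp) count_canon.
by rewrite subr0 !mulr1.
Qed.


Definition sn0 : crnpoly S C := [:: (1, [:: inl (Sb c n)])].

Lemma canon0 : canon 0 = [:: inl (Sb c n)].
Proof. by rewrite /canon /xs /labs /= subn0. Qed.

Lemma Inv0 : Inv 0 sn0.
Proof.
split.
  move=> t; rewrite inE => /eqP-> _ /=; split.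
    rewrite -canon0 Am_canon //; lia.
  by right; right; rewrite canon0.
by rewrite big_cons big_nil canon0 perm_refl addr0.
Qed.

Lemma Inv_iter l : (l <= 2 * k + 1)%N -> Inv l (iter l (ddt (network L Y Sb U)) sn0).
Proof.
elim: l => [|l IH] h; first exact: Inv0.
rewrite iterS; apply: Inv_step; first lia.
apply: IH; lia.
Qed.

Definition mon (r : nat) : mono S C := nseq r (inl (Y c)) ++ [:: inl (U c (n - k)%N)].
Definition Wl : seq (rlabel C) :=
    (c, (n - k)%N, RC) :: flatten [seq [:: (c, (n - j)%N, RA); (c, (n - j)%N, RC)]
                                  | j <- iota 0 k].

Lemma sum_mon f r w : (\sum_(v <- mon r ++ map inr w) fv f v = r * f (Y c) + f (U c (n - k)))%N.
Proof.
rewrite /mon !big_cat /= big_map [X in (_ + X)%N]big1 // addn0 big_seq1 big_nseq /=.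
congr (_ + _)%N; elim: r => //= i ->; rewrite mulSn //.
Qed.

Lemma target_nz l p t r w : (l <= 2 * k + 1)%N -> Inv l p -> t \in p -> t.1 != 0 ->
  perm_eq t.2 (mon r ++ map inr w) -> [/\ l = (2 * k + 1)%N, r = k & perm_eq Wl w].
Proof.
move=> hl [HP _] ht hnz hp; case: (HP t ht hnz) => _ htri.
have hv : valid c (n - k) by rewrite /valid; lia.
have hS1 : ((n - k).-1 <= L c)%N by lia.
have hG : Gm t.2 = 1%N.
  rewrite (Gm_perm hp) /Gm sum_mon gamY muln0 gamU // th_Y th_S //; lia.
have hB : Bad t.2 = false.
  rewrite (Bad_perm hp) /Bad /Am /Jm !sum_mon AcntY JcntY !muln0 AcntU // JcntU // alphaS //.
  by rewrite !eqxx /= andbF /=; case: eqP => // /alphaY.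
have hc : perm_eq t.2 (canon l).
  by case: htri => [|[|//]]; [rewrite hB | rewrite hG /g0; lia].
have hpc : perm_eq (canon l) (mon r ++ map inr w) by apply: perm_trans hp; rewrite perm_sym.
have hx : inl (xs l) \in mon r ++ map inr w by rewrite -(perm_mem hpc) inE eqxx.
have e := odd_double_half l; rewrite -muln2 in e.
have hh := half_le hl.
have hvl := valid_can hl.
have hSl : (n - l./2 <= L c)%N by move: hvl; rewrite /valid; lia.
move: hx; rewrite /mon mem_cat mem_cat mem_nseq inE => /orP[/orP[/andP[_ /eqP[]] | /eqP[]] | /mapP[? _ //]].
  by move=> /(xs_neY hl).
move: e; rewrite /xs; case: ifP => ho e exu; last first.
  by exfalso; exact: (UneS hv hSl (esym exu)).
case: (U_inj hvl hv exu) => _ ehalf.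
have hk2 : l./2 = k by lia.
have hl2 : l = (2 * k + 1)%N by lia.
subst l.
have hcnt := permP hpc (pred1 (inl (Y c))).
have hY1 : (inl (xs (2 * k + 1)) == inl (Y c) :> var S C) = false.
  by apply/eqP => -[]; apply: xs_neY.
have hY2 : (inl (U c (n - k)) == inl (Y c) :> var S C) = false.
  by apply/eqP => -[]; apply: UneY.
have hc0 : forall (s : seq (rlabel C)), count (preim inr (pred1 (inl (Y c) : var S C))) s = 0%N.
  by move=> s; apply/eqP; rewrite -leqn0 leqNgt -has_count; apply/hasPn.
rewrite /canon /mon /= !count_cat !count_nseq /= !count_map !hc0 hY1 hY2 eqxx hk2 in hcnt.
have hr : r = k by move: hcnt; clear; rewrite /=; lia.
subst r; split => //.
move: hpc; rewrite /canon /labs /xs.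
have -> : odd (2 * k + 1) by rewrite addn1 oddS mul2n odd_double.
rewrite hk2 /= -/Wl /mon.
rewrite -cat1s perm_catCA -catA perm_cat2l -cat1s perm_cat2l.
have inj : injective (@inr S (rlabel C)) by move=> a b [].
by move=> h; apply: (perm_map_inj inj); exact: h.
Qed.

Lemma coef_nz (p : crnpoly S C) m : coef p m != 0 ->
  exists t, [/\ t \in p, perm_eq t.2 m & t.1 != 0].
Proof.
move=> h.
have : has (fun t : term S C => perm_eq t.2 m && (t.1 != 0)) p.
  apply/negPn/negP => /hasPn hnn; move: h; rewrite /coef big_seq_cond big1 ?eqxx //.
  move=> t /andP[ht hp]; have := hnn t ht; rewrite hp /= => /negbNE /eqP //.
by case/hasP => t ht /andP[hp hnz]; exists t.
Qed.


Lemma final :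
  (forall l r, (0 < l < 2 * k + 1)%N ->
     ~ appears (iter l (ddt (network L Y Sb U)) sn0) (mon r)) /\
  (forall r, appears (iter (2 * k + 1) (ddt (network L Y Sb U)) sn0) (mon r) <-> r = k) /\
  (forall w : seq (rlabel C),
     coef (iter (2 * k + 1) (ddt (network L Y Sb U)) sn0) (mon k ++ map inr w)
     = if perm_eq w Wl then 1 else 0).
Proof.
have hI := @Inv_iter (2 * k + 1) (leqnn _).
have part3 : forall w : seq (rlabel C),
     coef (iter (2 * k + 1) (ddt (network L Y Sb U)) sn0) (mon k ++ map inr w)
     = if perm_eq w Wl then 1 else 0.
  move=> w; case: ifP => hw.
    have hpm : perm_eq (mon k ++ map inr w) (canon (2 * k + 1)).
      rewrite /canon /labs /xs.
      have -> : odd (2 * k + 1) by rewrite addn1 oddS mul2n odd_double.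
      have -> : (2 * k + 1)./2 = k by rewrite addn1 -uphalfE uphalf_half mul2n odd_double add0n doubleK.
      rewrite /mon -/Wl -catA perm_catC /= perm_cons perm_catC perm_cat2l.
      exact: perm_map hw.
    rewrite /coef -(proj2 hI); apply: eq_bigl => t /=.
    by apply/idP/idP => h; [apply: perm_trans hpm | apply: perm_trans h _; rewrite perm_sym].
  apply/eqP; apply/negPn/negP => /coef_nz [t [ht hp hnz]].
  case: (target_nz (leqnn _) hI ht hnz hp) => _ _ hW.
  by rewrite perm_sym hw in hW.
split; last split => //.
- move=> l r hl [w hw]; case: (coef_nz hw) => t [ht hp hnz].
  have hl' : (l <= 2 * k + 1)%N by lia.
  case: (target_nz hl' (Inv_iter hl') ht hnz hp) => e _ _; lia.
- move=> r; split.
    case=> w hw; case: (coef_nz hw) => t [ht hp hnz].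
    by case: (target_nz (leqnn _) hI ht hnz hp).
  by move=> ->; exists Wl; rewrite part3 perm_refl.
Qed.

End Proof.


Unset Implicit Arguments.
Local Open Scope ring_scope.

Theorem mainTheorem11 (S : eqType) (C : finType) (L : C -> nat) (Y : C -> S)
  (Sb U : C -> nat -> S) (part : S -> nat) (M : nat) :
  H1 L Y Sb U -> H2 L Y Sb U part M ->
  forall (c : C) (n k : nat), (1 <= n <= L c)%N -> (k < n)%N ->
  let net := network L Y Sb U in
  let sn : crnpoly S C := [:: (1, [:: inl (Sb c n)])] in
  let mon (r : nat) : mono S C := nseq r (inl (Y c)) ++ [:: inl (U c (n - k)%N)] in
  let W : seq (rlabel C) :=
    (c, (n - k)%N, RC) :: flatten [seq [:: (c, (n - j)%N, RA); (c, (n - j)%N, RC)]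
                                  | j <- iota 0 k] in
  (forall l r, (0 < l < 2 * k + 1)%N -> ~ appears (iter l (ddt net) sn) (mon r)) /\
  (forall r, appears (iter (2 * k + 1) (ddt net) sn) (mon r) <-> r = k) /\
  (forall w : seq (rlabel C),
     coef (iter (2 * k + 1) (ddt net) sn) (mon k ++ map inr w)
     = if perm_eq w W then 1 else 0).
Proof.
move=> h1 h2 c n k hn hk net sn mon W.
exact: (final h1 h2 hn hk).
Qed.
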